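(* Let $G$ be a bipartite graph with $p(G)=|V(G)|\ge 3$ vertices and $q(G)=|E(G)|\ge 2p(G)-2$ edges. Then $G$ is not bipartite Ramsey size linear.
   Context: For bipartite graphs $G_1,G_2$, the bipartite Ramsey number $\operatorname{br}(G_1,G_2)$ is the smallest integer $N$ such that every red/blue coloring of the edges of $K_{N,N}$ contains a red copy of $G_1$ or a blue copy of $G_2$. A bipartite graph $H$ is called bipartite Ramsey size linear if there exists a constant $C$ such that for every bipartite graph $G'$ with $m$ edges and no isolated vertices, $\operatorname{br}(H,G')\le C\cdot m$. *)

(* Defs.v *)
From mathcomp Require Import all_boot.
Set Implicit Arguments. Unset Strict Implicit. Unset Printing Implicit Defensive.

Definition simple_graph (V : finType) (E : rel V) : Prop :=
  symmetric E /\ irreflexive E.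

Definition bipartite (V : finType) (E : rel V) : Prop :=
  exists side : V -> bool, forall u v, E u v -> side u != side v.

Definition edge_set (V : finType) (E : rel V) : {set {set V}} :=
  [set A : {set V} | [exists u, exists v, E u v && (A == [set u; v])]].

Definition num_edges (V : finType) (E : rel V) : nat := #|edge_set E|.

Definition no_isolated (V : finType) (E : rel V) : Prop :=
  forall u, exists v, E u v.

(* K_{N,N}: vertices 'I_N + 'I_N (two sides), edges between the sides.
   A red/blue colouring is c : 'I_N -> 'I_N -> bool, with c i j = true
   meaning the edge (left i, right j) is red. *)
Definition KNN_col (N : nat) (c : 'I_N -> 'I_N -> bool) (red : bool)
  (x y : 'I_N + 'I_N) : bool :=
  match x, y with
  | inl i, inr j => c i j == red
  | inr j, inl i => c i j == red
  | _, _ => false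
  end.

Definition has_copy (V : finType) (E : rel V) (N : nat)
  (c : 'I_N -> 'I_N -> bool) (red : bool) : Prop :=
  exists f : V -> 'I_N + 'I_N,
    injective f /\ forall u v, E u v -> KNN_col c red (f u) (f v).

Definition br_prop (V1 : finType) (E1 : rel V1) (V2 : finType) (E2 : rel V2)
  (N : nat) : Prop :=
  forall c : 'I_N -> 'I_N -> bool, has_copy E1 c true \/ has_copy E2 c false.

Definition is_br (V1 : finType) (E1 : rel V1) (V2 : finType) (E2 : rel V2)
  (N : nat) : Prop :=
  br_prop E1 E2 N /\ forall M, M < N -> ~ br_prop E1 E2 M.

(* H is bipartite Ramsey size linear. (A natural-number constant C is
   equivalent to a real one by taking ceilings.) *)
Definition br_size_linear (V : finType) (E : rel V) : Prop :=
  exists C : nat,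
    forall (V' : finType) (E' : rel V'),
      simple_graph E' -> bipartite E' -> no_isolated E' ->
      exists N, is_br E E' N /\ N <= C * num_edges E'.

(* Main.v *)
Require Import Defs.
From mathcomp Require Import all_boot all_order all_algebra.
From mathcomp Require Import ring lra zify.
Set Implicit Arguments. Unset Strict Implicit. Unset Printing Implicit Defensive.

Module P1.
Import Order.TTheory GRing.Theory Num.Theory.
Local Open Scope ring_scope.

Section LLL.
Variables (R : realFieldType) (Om I : finType) (w : Om -> R).
Hypothesis w_ge0 : forall c, 0 <= w c.
Definition Pr (F : pred Om) := \sum_(c | F c) w c.
Variables (A : I -> pred Om) (adj : I -> I -> bool) (x : I -> R).
Definition Zs (S : {set I}) : pred Om := fun c => [forall j in S, ~~ A j c].
Hypothesis x01 : forall i, 0 <= x i <= 1.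
Hypothesis indep : forall i (S : {set I}), (forall j, j \in S -> ~~ adj i j) ->
  Pr (predI (A i) (Zs S)) <= Pr (A i) * Pr (Zs S).
Hypothesis cond : forall i, Pr (A i) <= x i * \prod_(j | adj i j && (j != i)) (1 - x j).

Lemma Pr_ge0 F : 0 <= Pr F.
Proof. by apply: sumr_ge0 => c _; apply: w_ge0. Qed.

Lemma Pr_mono (F G : pred Om) : (forall c, F c -> G c) -> Pr F <= Pr G.
Proof.
move=> FG; rewrite /Pr [X in _ <= X](bigID F) /=.
rewrite (eq_bigl F); last by move=> c; case Fc: (F c); rewrite ?andbF // (FG _ Fc).
by rewrite lerDl; apply: sumr_ge0 => c _; apply: w_ge0.
Qed.

Lemma Pr_split (F G : pred Om) : Pr F = Pr (predI F G) + Pr (predI F (predC G)).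
Proof. by rewrite /Pr (bigID G). Qed.

Lemma grow n : forall (S0 U : {set I}), #|U| = n -> [disjoint S0 & U] ->
  (forall (T : {set I}) j, S0 \subset T -> T \subset S0 :|: U -> j \in U -> j \notin T ->
     Pr (predI (A j) (Zs T)) <= x j * Pr (Zs T)) ->
  \prod_(j in U) (1 - x j) * Pr (Zs S0) <= Pr (Zs (S0 :|: U)).
Proof.
elim: n => [|n IH] S0 U cU dis H.
  move/eqP: cU; rewrite cards_eq0 => /eqP ->; rewrite big_set0 mul1r setU0 //.
have [j jU] : exists j, j \in U.
  by apply/set0Pn; rewrite -card_gt0 cU.
set U' := U :\ j.
have cU' : #|U'| = n by move: cU; rewrite (cardsD1 j U) jU add1n => -[].
have dis' : [disjoint S0 & U'].
  by apply: disjointWr dis; apply: subD1set.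
have H' : forall (T : {set I}) j', S0 \subset T -> T \subset S0 :|: U' -> j' \in U' -> j' \notin T ->
     Pr (predI (A j') (Zs T)) <= x j' * Pr (Zs T).
  move=> T j' s1 s2 j'U j'T; apply: H => //.
    by apply: (subset_trans s2); apply: setUS; apply: subD1set.
  by move: j'U; rewrite in_setD1 => /andP [].
have IH' := IH S0 U' cU' dis' H'.
have jT : j \notin S0 :|: U'.
  rewrite in_setU in_setD1 eqxx /= orbF.
  by rewrite (disjointFl dis jU).
have Hj := H (S0 :|: U') j (subsetUl _ _) (setUS _ (subD1set _ _)) jU jT.
have eqZ : Pr (Zs (S0 :|: U)) = Pr (predI (Zs (S0 :|: U')) (predC (A j))).
  rewrite /Pr; apply: eq_bigl => c /=; rewrite /Zs.
  apply/idP/idP.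
    move/forallP => h; apply/andP; split; last by have := h j; rewrite in_setU jU orbT.
    by apply/forallP => k; apply/implyP => kin; have := h k; rewrite (subsetP (setUS _ (subD1set _ _)) _ kin).
  move=> /andP [/forallP h1 h2]; apply/forallP => k; apply/implyP => kin.
  case: (eqVneq k j) => [->//|kj].
  by move: (h1 k) kin; rewrite !in_setU in_setD1 kj /= => /implyP.
rewrite eqZ.
have E1 := Pr_split (Zs (S0 :|: U')) (A j).
have E2 : Pr (predI (Zs (S0 :|: U')) (A j)) = Pr (predI (A j) (Zs (S0 :|: U'))).
  by apply: eq_bigl => c /=; rewrite andbC.
rewrite (bigD1 j) //=.
have -> : \prod_(i in U | i != j) (1 - x i) = \prod_(i in U') (1 - x i).
  by apply: eq_bigl => i; rewrite in_setD1 andbC.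
have xj := x01 j.
have h0 : 0 <= \prod_(i in U') (1 - x i).
  by apply: prodr_ge0 => i _; have := x01 i; rewrite subr_ge0 => /andP [].
have : Pr (predI (Zs (S0 :|: U')) (predC (A j))) = Pr (Zs (S0 :|: U')) - Pr (predI (A j) (Zs (S0 :|: U'))).
  by rewrite E1 -E2 addrC addKr.
move=> ->.
have hp := Pr_ge0 (Zs (S0 :|: U')).
have hp0 := Pr_ge0 (Zs S0).
have: (1 - x j) * (\prod_(i in U') (1 - x i) * Pr (Zs S0)) <= (1 - x j) * Pr (Zs (S0 :|: U')).
  by apply: ler_wpM2l => //; rewrite subr_ge0; case/andP: xj.
rewrite mulrA; move=> h; apply: (le_trans h).
move: Hj; case/andP: xj => xj0 xj1. lra.
Qed.

Lemma claim_step (S : {set I}) i :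
  (forall (T : {set I}) j, (#|T| < #|S|)%N -> j \notin T ->
     Pr (predI (A j) (Zs T)) <= x j * Pr (Zs T)) ->
  i \notin S -> Pr (predI (A i) (Zs S)) <= x i * Pr (Zs S).
Proof.
move=> IH iS.
set S1 := [set j in S | adj i j]; set S2 := [set j in S | ~~ adj i j].
have eS : S = S2 :|: S1.
  apply/setP => j; rewrite !inE; by case: (j \in S); case: (adj i j).
have dis : [disjoint S2 & S1].
  by rewrite -setI_eq0; apply/eqP/setP => j; rewrite !inE; case: (adj i j); rewrite ?andbF.
have xi := x01 i.
have h1 : Pr (predI (A i) (Zs S)) <= Pr (predI (A i) (Zs S2)).
  apply: Pr_mono => c /andP [Ac /forallP h]; apply/andP; split => //.
  apply/forallP => j; apply/implyP => jS2; apply: (implyP (h j)).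
  by move: jS2; rewrite inE => /andP [].
have h2 : Pr (predI (A i) (Zs S2)) <= Pr (A i) * Pr (Zs S2).
  by apply: indep => j; rewrite inE => /andP [].
have hp1 : 0 <= \prod_(j in S1) (1 - x j).
  by apply: prodr_ge0 => j _; have := x01 j; rewrite subr_ge0 => /andP [].
have h3 : \prod_(j | adj i j && (j != i)) (1 - x j) <= \prod_(j in S1) (1 - x j).
  rewrite (bigID (fun j => j \in S1)) /=.
  have -> : \prod_(j | (adj i j && (j != i)) && (j \in S1)) (1 - x j) = \prod_(j in S1) (1 - x j).
    apply: eq_bigl => j; rewrite !inE; case jS: (j \in S); rewrite ?andbF //=.
    case: (adj i j); rewrite ?andbF //= andbT; apply/negP => /eqP ji.
    by move: iS; rewrite -ji jS.
  rewrite -[X in _ <= X]mulr1; apply: ler_wpM2l => //.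
  by apply: prodr_ile1 => j _; have := x01 j; case/andP => a b; apply/andP; split; lra.
have h4 : \prod_(j in S1) (1 - x j) * Pr (Zs S2) <= Pr (Zs (S2 :|: S1)).
  apply: (grow (n := #|S1|)) => // T j s1 s2 jS1 jT.
  apply: IH => //.
  have jS : j \in S by rewrite eS in_setU jS1 orbT.
  have sub : T \subset S :\ j.
    apply/subsetP => k kT; rewrite in_setD1; apply/andP; split.
      by apply/eqP => kj; move: jT; rewrite -kj kT.
    by rewrite eS; apply: (subsetP s2).
  apply: (leq_ltn_trans (subset_leq_card sub)).
  by rewrite (cardsD1 j S) jS add1n ltnSn.
rewrite -eS in h4.
have hA := cond i.
have hPA := Pr_ge0 (A i).
have hZ2 := Pr_ge0 (Zs S2).
have hpp : 0 <= \prod_(j | adj i j && (j != i)) (1 - x j).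
  by apply: prodr_ge0 => j _; have := x01 j; rewrite subr_ge0 => /andP [].
apply: (le_trans h1); apply: (le_trans h2).
apply: (le_trans (y := x i * \prod_(j in S1) (1 - x j) * Pr (Zs S2))).
  apply: ler_wpM2r => //; apply: (le_trans hA); apply: ler_wpM2l => //; by case/andP: xi.
rewrite -mulrA; apply: ler_wpM2l => //; by case/andP: xi.
Qed.

Lemma claim n : forall (S : {set I}) i, (#|S| < n)%N -> i \notin S ->
  Pr (predI (A i) (Zs S)) <= x i * Pr (Zs S).
Proof.
elim: n => [//|n IH] S i cS iS; apply: claim_step => // T j cT jT.
by apply: IH => //; apply: (leq_trans cT).
Qed.

Lemma lll : \prod_i (1 - x i) * Pr predT <= Pr (Zs setT).
Proof.
have d0 : [disjoint set0 & [set: I]] by rewrite -setI_eq0 set0I.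
have := @grow #|[set: I]| set0 setT erefl d0.
rewrite set0U.
have -> : Pr (Zs set0) = Pr predT by apply: eq_bigl => c; rewrite /Zs; apply/forallP => j; rewrite inE.
have -> : \prod_(j in [set: I]) (1 - x j) = \prod_j (1 - x j) by apply: eq_bigl => j; rewrite inE.
apply => T j _ _ _ jT; exact: (claim (n := #|T|.+1)).
Qed.
End LLL.

End P1.
Import P1.

Module P2.
Import Order.TTheory GRing.Theory Num.Theory.
Local Open Scope ring_scope.

Section Cyl.
Variables (R : realFieldType) (T : finType) (rho : R).
Hypothesis rho0 : 0 <= rho.
Hypothesis rho1 : rho <= 1.
Definition pib (b : bool) := if b then rho else 1 - rho.
Definition wt (c : {ffun T -> bool}) := \prod_e pib (c e).
Definition upd (c : {ffun T -> bool}) e b : {ffun T -> bool} :=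
  [ffun e' => if e' == e then b else c e'].

Lemma pib_ge0 b : 0 <= pib b.
Proof. by move: rho0 rho1; rewrite /pib; case: b => /=; lra. Qed.
Lemma pib_le1 b : pib b <= 1.
Proof. by move: rho0 rho1; rewrite /pib; case: b => /=; lra. Qed.

Lemma wt_ge0 c : 0 <= wt c.
Proof. by apply: prodr_ge0 => e _; apply: pib_ge0. Qed.

Lemma wt_sum : \sum_c wt c = 1.
Proof.
rewrite /wt -(bigA_distr_bigA (fun (e : T) (b : bool) => pib b)) /=.
by apply: big1 => e _; rewrite big_bool /=; ring.
Qed.

Lemma wtD1 c e : wt c = pib (c e) * \prod_(e' | e' != e) pib (c e').
Proof. by rewrite /wt (bigD1 e). Qed.

Lemma cyl1 e b (G : {ffun T -> bool} -> R) :
  (forall c b', G (upd c e b') = G c) ->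
  \sum_c wt c * ((c e == b)%:R * G c) = pib b * \sum_c wt c * G c.
Proof.
move=> HG.
set fl := fun c => upd c e (~~ c e).
have flK : involutive fl.
  move=> c; apply/ffunP => e'; rewrite /fl /upd !ffunE; case: (eqVneq e' e) => [->|//].
  by rewrite !eqxx ?ffunE ?eqxx negbK.
have fle c : fl c e = ~~ c e by rewrite /fl /upd ffunE eqxx.
have flo c e' : e' != e -> fl c e' = c e' by move=> ne; rewrite /fl /upd ffunE (negPf ne).
have wfl c : wt (fl c) = pib (~~ c e) * \prod_(e' | e' != e) pib (c e').
  rewrite (wtD1 _ e) fle; congr (_ * _); apply: eq_bigr => e' ne; by rewrite flo.
have Gfl c : G (fl c) = G c by rewrite /fl HG.
rewrite [in RHS](bigID (fun c : {ffun T -> bool} => c e == b)) /=.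
rewrite [X in _ * (_ + X)](reindex_inj (can_inj flK)) /=.
have neqE c : (fl c e != b) = (c e == b) by rewrite fle; case: (c e); case: b.
under [X in _ * (_ + X)]eq_bigl => c do rewrite neqE.
rewrite -big_split /= mulr_sumr.
rewrite [LHS](bigID (fun c : {ffun T -> bool} => c e == b)) /=.
rewrite [X in _ + X = _]big1; last first.
  by move=> c /negPf ->; rewrite mul0r mulr0.
rewrite addr0; apply: eq_bigr => c /eqP ce.
rewrite Gfl wfl (wtD1 c e) ce eqxx mul1r.
by clear neqE; case: b {ce} => /=; ring.
Qed.

Lemma cylS (s : seq T) b (G : {ffun T -> bool} -> R) : uniq s ->
  (forall e, e \in s -> forall c b', G (upd c e b') = G c) ->
  \sum_c wt c * ((all (fun e => c e == b) s)%:R * G c) = pib b ^+ size s * \sum_c wt c * G c.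
Proof.
elim: s G => [|e s IH] G /=.
  by move=> _ _; rewrite expr0 mul1r; apply: eq_bigr => c _; rewrite mul1r.
move=> /andP [es us] HG.
have HG' : forall c b', ((all (fun e0 => upd c e b' e0 == b) s)%:R * G (upd c e b')) =
   ((all (fun e0 => c e0 == b) s)%:R * G c).
  move=> c b'; rewrite HG ?mem_head //; congr (_%:R * _).
  rewrite (@eq_in_all _ _ (fun e0 => c e0 == b)) // => e' e's /=; rewrite ffunE; case: (eqVneq e' e) => // ee.
  by move: es; rewrite -ee e's.
transitivity (\sum_c wt c * ((c e == b)%:R * ((all (fun e0 => c e0 == b) s)%:R * G c))).
  by apply: eq_bigr => c _; case: (c e == b); rewrite ?mul1r ?mul0r.
rewrite (@cyl1 e b (fun c => (all (fun e0 => c e0 == b) s)%:R * G c)) //.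
rewrite IH // ?exprS ?mulrA // => e' e's c b'; apply: HG.
by rewrite inE e's orbT.
Qed.
End Cyl.

End P2.
Import P2.

Module P3.
Import Order.TTheory GRing.Theory Num.Theory.
Local Open Scope ring_scope.

Section NumS.
Variable R : realFieldType.

Lemma bern_lo (x : R) n : 0 <= x -> x <= 1 -> 1 - n%:R * x <= (1 - x) ^+ n.
Proof.
move=> x0 x1; elim: n => [|n IH]; first by rewrite expr0 mul0r subr0.
rewrite exprS -natr1.
have h0 : 0 <= 1 - x by lra.
have : (1 - n%:R * x) * (1 - x) <= (1 - x) * (1 - x) ^+ n.
  by rewrite mulrC; apply: ler_wpM2l.
have hn : 0 <= n%:R :> R by apply: ler0n.
nra.
Qed.

Lemma bern_up (x : R) n : 0 <= x -> 1 + n%:R * x <= (1 + x) ^+ n.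
Proof.
move=> x0; elim: n => [|n IH]; first by rewrite expr0 mul0r addr0.
rewrite exprS -natr1.
have h0 : 0 <= 1 + x by lra.
have : (1 + n%:R * x) * (1 + x) <= (1 + x) * (1 + x) ^+ n.
  by rewrite mulrC; apply: ler_wpM2l.
have hn : 0 <= n%:R :> R by apply: ler0n.
nra.
Qed.

Lemma half_bound (k : nat) : (0 < k)%N -> (1 - k%:R^-1) ^+ k <= 2^-1 :> R.
Proof.
move=> k0; pose x : R := k%:R^-1; rewrite -/x.
have kx : k%:R * x = 1 by rewrite /x mulfV // pnatr_eq0 -lt0n.
have x0 : 0 <= x by rewrite /x invr_ge0 ler0n.
have x1 : x <= 1 by rewrite /x invf_le1 ?ler1n ?ltr0n.
have h1 := bern_up k x0.
have h2 : ((1 - x) * (1 + x)) ^+ k <= 1.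
  apply: exprn_ile1; nra.
rewrite exprMn in h2.
have h3 : 0 <= (1 - x) ^+ k by apply: exprn_ge0; lra.
rewrite kx in h1.
nra.
Qed.

Lemma pow_mono_exp (y : R) (m n : nat) : 0 <= y -> y <= 1 -> (m <= n)%N -> y ^+ n <= y ^+ m.
Proof. by move=> y0 y1 mn; apply: ler_wiXn2l. Qed.

End NumS.

Section Cond.
Variable R : realFieldType.
Variables (k q K : nat).
Hypothesis k2 : (2 <= k)%N.
Hypothesis K0 : (0 < K)%N.
Hypothesis q1 : (1 <= q)%N.
Definition rho : R := k%:R^-1.
Definition yq : R := (k%:R ^+ q)^-1.
Definition xa : R := 2 * yq.
Definition xb : R := (4 * K)%:R^-1.

Lemma kq_pos : 0 < k%:R ^+ q :> R.
Proof. by apply: exprn_gt0; rewrite ltr0n; apply: leq_trans k2. Qed.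

Lemma yq_pos : 0 < yq.
Proof. by rewrite /yq invr_gt0 kq_pos. Qed.

Lemma yq_mul : k%:R ^+ q * yq = 1.
Proof. by rewrite /yq mulfV // gt_eqF // kq_pos. Qed.

Lemma rhoq : rho ^+ q = yq.
Proof. by rewrite /rho /yq exprVn. Qed.

Lemma xb_mul : (4 * K)%:R * xb = 1.
Proof. by rewrite /xb mulfV // pnatr_eq0 muln_eq0 /= -lt0n K0. Qed.

Lemma xb_pos : 0 < xb.
Proof. by rewrite /xb invr_gt0 ltr0n muln_gt0 K0. Qed.

Lemma xb01 : 0 <= xb <= 1.
Proof.
have := xb_mul; have := xb_pos.
have : 4%:R <= (4 * K)%:R :> R by rewrite ler_nat leq_pmulr.
move=> h1 h2 h3; apply/andP; split; nra.
Qed.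

Lemma xbK (cB : nat) : (cB <= K)%N -> 3 / 4 <= (1 - xb) ^+ cB.
Proof.
move=> cBK; have [h0 h1] := andP xb01.
apply: (le_trans _ (pow_mono_exp _ _ cBK)); try lra.
apply: (le_trans _ (bern_lo K h0 h1)).
have := xb_mul; rewrite natrM => h; nra.
Qed.

Lemma kq2 : 2 <= k%:R ^+ q :> R.
Proof.
rewrite -natrX ler_nat; apply: (leq_trans k2).
by rewrite -{1}(expn1 k) leq_pexp2l // (leq_trans _ k2).
Qed.

Lemma xa01 : 0 <= xa <= 1.
Proof.
have := yq_mul; have := yq_pos; have := kq2; rewrite /xa.
move=> h1 h2 h3; apply/andP; split; nra.
Qed.

Lemma condA (cA cB dAA : nat) : (cA <= dAA)%N -> (cB <= K)%N -> (8 * dAA <= k ^ q)%N ->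
  rho ^+ q <= xa * ((1 - xa) ^+ cA * (1 - xb) ^+ cB).
Proof.
move=> h1 h2 h3; rewrite rhoq.
have [a0 a1] := andP xa01.
have hb := xbK h2.
have ha : 3 / 4 <= (1 - xa) ^+ cA.
  apply: (le_trans _ (pow_mono_exp _ _ h1)); try lra.
  apply: (le_trans _ (bern_lo dAA a0 a1)).
  have : (8 * dAA)%:R <= (k ^ q)%:R :> R by rewrite ler_nat.
  rewrite natrM natrX => h.
  have := yq_mul; have := yq_pos; rewrite /xa => y0 ym.
  have : 0 <= dAA%:R :> R by apply: ler0n.
  nra.
have y0 := yq_pos.
rewrite /xa.
have : 9/16 <= (1 - xa) ^+ cA * (1 - xb) ^+ cB.
  have : 0 <= 3/4 :> R by lra.
  move=> h; apply: (le_trans _ (ler_pM h h ha hb)); lra.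
rewrite /xa => h. nra.
Qed.

Lemma condB (cA cB dBA nn t r L : nat) : (cA <= dBA)%N -> (cB <= K)%N -> nn = (k * t)%N ->
  (4 * L = k ^ q)%N -> (dBA <= L * r)%N -> (16 * K * 2 ^ r <= 2 ^ t)%N ->
  (1 - rho) ^+ nn <= xb * ((1 - xa) ^+ cA * (1 - xb) ^+ cB).
Proof.
move=> h1 h2 -> hL h3 h4.
have [a0 a1] := andP xa01.
have hb := xbK h2.
have k0 : (0 < k)%N by apply: leq_trans k2.
have hl : (1 - rho) ^+ (k * t) <= (2^-1) ^+ t.
  rewrite exprM; apply: lerXn2r; rewrite ?nnegrE.
  - apply: exprn_ge0; rewrite /rho subr_ge0 invf_le1 ?ler1n ?ltr0n //.
  - lra.
  - exact: half_bound.
have hL2 : 2^-1 <= (1 - xa) ^+ L.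
  apply: (le_trans _ (bern_lo L a0 a1)).
  have : (4 * L)%:R = k%:R ^+ q :> R by rewrite hL natrX.
  rewrite natrM => h.
  have := yq_mul; rewrite /xa => ym. nra.
have ha : (2^-1) ^+ r <= (1 - xa) ^+ cA.
  apply: (le_trans _ (pow_mono_exp _ _ (leq_trans h1 h3))); try lra.
  rewrite exprM; apply: lerXn2r; rewrite ?nnegrE //; try lra.
have h5 : (16 * K * 2 ^ r)%:R <= (2 ^ t)%:R :> R by rewrite ler_nat.
rewrite !natrM !natrX in h5.
have e1 : (2^-1) ^+ t * 2%:R ^+ t = 1 :> R by rewrite -exprMn mulVf ?expr1n // pnatr_eq0.
have e2 : (2^-1) ^+ r * 2%:R ^+ r = 1 :> R by rewrite -exprMn mulVf ?expr1n // pnatr_eq0.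
have := xb_mul; rewrite natrM => xm.
have p1 : 0 < (2^-1 : R) ^+ r by apply: exprn_gt0; lra.
have p2 : 0 < (2^-1 : R) ^+ t by apply: exprn_gt0; lra.
have xbp := xb_pos.
have : xb * ((2^-1) ^+ r * (3/4)) <= xb * ((1 - xa) ^+ cA * (1 - xb) ^+ cB).
  apply: ler_wpM2l; first lra.
  apply: ler_pM => //; lra.
move=> hh; apply: (le_trans hl); apply: (le_trans _ hh).
(* (1/2)^t <= xb * (1/2)^r * 3/4 *)
have hK : 0 < K%:R :> R by rewrite ltr0n.
set A := (2^-1 : R) ^+ r in e2 p1 hh *; set B := (2^-1 : R) ^+ t in e1 p2 hl *.
set C := (2%:R : R) ^+ r in e2 h5; set D := (2%:R : R) ^+ t in e1 h5.
have hC : 0 < C by rewrite /C exprn_gt0 // ltr0n.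
have hD : 0 < D by rewrite /D exprn_gt0 // ltr0n.
have hB : B = D^-1.
  have uD : D \is a GRing.unit by rewrite unitfE gt_eqF.
  by rewrite -[B](mulrK uD) e1 mul1r.
have hA : A = C^-1.
  have uC : C \is a GRing.unit by rewrite unitfE gt_eqF.
  by rewrite -[A](mulrK uC) e2 mul1r.
rewrite hB hA.
have hxb : xb = (4 * K%:R)^-1.
  have uX : (4 * K%:R : R) \is a GRing.unit by rewrite unitfE; apply/eqP; nra.
  by rewrite -[xb](mulKr uX) xm mulr1.
rewrite hxb.
set Di := D^-1; set Ci := C^-1; set Ki := (4 * K%:R)^-1.
have eD : D * Di = 1 by rewrite /Di mulfV // gt_eqF.
have eC : C * Ci = 1 by rewrite /Ci mulfV // gt_eqF.
have hKp : 0 < 4 * K%:R :> R by nra.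
have eK : (4 * K%:R) * Ki = 1 by rewrite /Ki mulfV // gt_eqF.
have pDi : 0 < Di by rewrite /Di invr_gt0.
have pCi : 0 < Ci by rewrite /Ci invr_gt0.
have pKi : 0 < Ki by rewrite /Ki invr_gt0.
have s1 : (16%:R * K%:R * C) * Di <= 1.
  by move: (ler_wpM2r (ltW pDi) h5); rewrite eD.
have s2 : Di = (Di * (4 * K%:R) * C) * (Ki * Ci).
  transitivity (Di * ((4 * K%:R) * Ki) * (C * Ci)); first by rewrite eK eC !mulr1.
  ring.
have s3 : Di * (4 * K%:R) * C <= 1/4.
  have : Di * (4 * K%:R) * C = (16%:R * K%:R * C) * Di / 4.
    have -> : 16%:R = 4 * 4 :> R by rewrite -natrM.
    by field.
  move=> ->; lra.
rewrite s2.
have pKC : 0 < Ki * Ci by apply: mulr_gt0.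
apply: (le_trans (y := 1/4 * (Ki * Ci))).
  by apply: ler_wpM2r; lra.
nra.
Qed.
Lemma xa_lt1 : (2 <= q)%N -> xa < 1.
Proof.
move=> q2.
have h4 : (4 <= k ^ q)%N.
  apply: (@leq_trans (2 ^ 2)%N) => //; apply: (@leq_trans (k ^ 2)%N); first by rewrite leq_exp2r.
  by apply: leq_pexp2l => //; apply: leq_trans k2.
have : 4%:R <= (k ^ q)%:R :> R by rewrite ler_nat.
rewrite natrX => h; have := yq_mul; have := yq_pos; rewrite /xa.
move=> h1 h2; nra.
Qed.

Lemma xb_lt1 : xb < 1.
Proof.
have := xb_mul; have := xb_pos.
have : 4%:R <= (4 * K)%:R :> R by rewrite ler_nat leq_pmulr.
move=> h1 h2 h3; nra.
Qed.
End Cond.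

End P3.
Import P3.

Module P4.

Lemma card_bigcup_le (I T : finType) (r : seq I) (P : pred I) (F : I -> {set T}) :
  #|\bigcup_(i <- r | P i) F i| <= \sum_(i <- r | P i) #|F i|.
Proof.
elim: r => [|i r IH]; first by rewrite !big_nil cards0.
rewrite !big_cons; case: (P i) => //.
apply: leq_trans (leq_card_setU _ _).1 _; by rewrite leq_add2l.
Qed.

Lemma notdisj (T : finType) (A B : {set T}) : ~~ [disjoint A & B] -> exists2 x, x \in A & x \in B.
Proof. by case/pred0Pn => x /andP [h1 h2]; exists x. Qed.

Definition cross (T : Type) (x y : T + T) : bool :=
  match x, y with inl _, inr _ | inr _, inl _ => true | _, _ => false end.

Section Comb.
Variables (V : finType) (E : rel V) (M n : nat).
Hypothesis symE : symmetric E.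
Hypothesis irrE : irreflexive E.
Notation N := M.+1.
Notation W := ('I_N + 'I_N)%type.
Notation ET := ('I_N * 'I_N)%type.

Definition lft (z : W) : 'I_N := if z is inl i then i else ord0.
Definition rgt (z : W) : 'I_N := if z is inr i then i else ord0.

Definition DA (f : {ffun V -> W}) : {set ET} :=
  [set e | [exists u, exists v, E u v && (f u == inl e.1) && (f v == inr e.2)]].
Definition gA (f : {ffun V -> W}) := injectiveb f && [forall u, forall v, E u v ==> cross (f u) (f v)].

Lemma DA_ge f : gA f -> num_edges E <= #|DA f|.
Proof.
case/andP => /injectiveP finj /forallP cr.
pose h (e : ET) : {set V} := f @^-1: [set inl e.1; inr e.2].
apply: (leq_trans _ (leq_imset_card h (DA f))).
apply: subset_leq_card; apply/subsetP => A.
rewrite inE => /existsP [u /existsP [v /andP [Euv /eqP ->]]].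
have := cr u => /forallP /(_ v); rewrite Euv /=.
case fu: (f u) => [i|j]; case fv: (f v) => [i'|j'] //= _.
- apply/imsetP; exists (i, j'); first by rewrite inE; apply/existsP; exists u; apply/existsP; exists v; rewrite Euv fu fv !eqxx.
  apply/setP => z; rewrite !inE; apply/idP/idP.
    by case/orP => /eqP ->; rewrite ?fu ?fv eqxx ?orbT.
  case/orP => /eqP fz.
    by rewrite -fu in fz; rewrite (finj _ _ fz) eqxx.
  by rewrite -fv in fz; rewrite (finj _ _ fz) eqxx orbT.
- apply/imsetP; exists (i', j); first by rewrite inE; apply/existsP; exists v; apply/existsP; exists u; rewrite symE Euv fu fv !eqxx.
  apply/setP => z; rewrite !inE; apply/idP/idP.
    by case/orP => /eqP ->; rewrite ?fu ?fv eqxx ?orbT.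
  case/orP => /eqP fz.
    by rewrite -fv in fz; rewrite (finj _ _ fz) eqxx orbT.
  by rewrite -fu in fz; rewrite (finj _ _ fz) eqxx.
Qed.

Lemma DA_le f : #|DA f| <= #|V| * #|V|.
Proof.
rewrite -card_prod -cardsT.
apply: (leq_trans _ (leq_imset_card (fun uv : V * V => (lft (f uv.1), rgt (f uv.2))) [set: V * V])).
apply: subset_leq_card; apply/subsetP => e.
rewrite inE => /existsP [u /existsP [v /andP [/andP [_ /eqP fu] /eqP fv]]].
apply/imsetP; exists (u, v); rewrite ?inE //= fu fv /=.
by case: e {fu fv}.
Qed.

Lemma count_fixed2 (u v : V) (a b : W) : u != v ->
  #|[set g : {ffun V -> W} | (g u == a) && (g v == b)]| <= #|{: W}| ^ (#|V| - 2).
Proof.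
move=> uv.
pose h := fun g : {ffun V -> W} => ([ffun x => if (x == u) || (x == v) then a else g x] : {ffun V -> W}).
pose S := [set g : {ffun V -> W} | (g u == a) && (g v == b)]; rewrite -/S.
have hinj : {in S &, injective h}.
  move=> g1 g2; rewrite !inE => /andP [/eqP g1u /eqP g1v] /andP [/eqP g2u /eqP g2v] e.
  apply/ffunP => x; have := congr1 (fun g : {ffun V -> W} => g x) e; rewrite !ffunE.
  case: (eqVneq x u) => [->|xu]; first by rewrite g1u g2u.
  case: (eqVneq x v) => [->|xv]; first by rewrite g1v g2v.
  by [].
rewrite -(card_in_imset hinj).
pose D := [set x | (x != u) && (x != v)].
have cD : #|D| = #|V| - 2.
  have -> : D = ~: [set u; v] by apply/setP => x; rewrite !inE negb_or.
  by rewrite cardsCs setCK cards2 uv.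
rewrite -cD -(card_pffun_on a D (predT : pred W)).
apply: subset_leq_card; apply/subsetP => g' /imsetP [g _ ->].
apply/pffun_onP; split; last by move=> y _.
apply/subsetP => x; rewrite !inE ffunE.
by case: (x == u); case: (x == v); rewrite ?eqxx.
Qed.

Lemma count_e (e : ET) :
  #|[set g : {ffun V -> W} | e \in DA g]| <= #|V| * #|V| * (N + N) ^ (#|V| - 2).
Proof.
apply: (@leq_trans #|\bigcup_(uv : V * V | E uv.1 uv.2) [set g : {ffun V -> W} | (g uv.1 == inl e.1) && (g uv.2 == inr e.2)]|).
  apply: subset_leq_card; apply/subsetP => g; rewrite !inE => /existsP [u /existsP [v /andP [/andP [Euv fu] fv]]].
  by apply/bigcupP; exists (u, v) => //; rewrite inE fu fv.
apply: (leq_trans (card_bigcup_le _ _ _)).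
rewrite -card_prod -sum_nat_const.
apply: (@leq_trans (\sum_(uv : V * V | E uv.1 uv.2) (N + N) ^ (#|V| - 2))).
  apply: leq_sum => uv Euv; have := count_fixed2 (inl e.1) (inr e.2) (_ : uv.1 != uv.2).
  rewrite card_sum card_ord; apply; apply/eqP => ee; by move: Euv; rewrite ee irrE.
rewrite [X in X <= _]big_mkcond /=; apply: leq_sum => uv _; by case: ifP.
Qed.

Lemma count_nbr (D : {set ET}) :
  #|[set g : {ffun V -> W} | ~~ [disjoint D & DA g]]| <= #|D| * (#|V| * #|V| * (N + N) ^ (#|V| - 2)).
Proof.
apply: (@leq_trans #|\bigcup_(e in D) [set g : {ffun V -> W} | e \in DA g]|).
  apply: subset_leq_card; apply/subsetP => g; rewrite inE => /notdisj [e eD eA].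
  by apply/bigcupP; exists e => //; rewrite inE.
apply: (leq_trans (card_bigcup_le _ _ _)).
rewrite -sum_nat_const; apply: leq_sum => e _; apply: count_e.
Qed.
End Comb.

End P4.
Import P4.

Module P5.
Import Order.TTheory GRing.Theory Num.Theory.
Local Open Scope ring_scope.

Section Cyl2.
Variables (R : realFieldType) (T : finType) (rho : R).
Hypothesis rho0 : (0 <= rho)%R.
Hypothesis rho1 : (rho <= 1)%R.

Lemma sum_filter (F : pred {ffun T -> bool}) :
  (\sum_(c | F c) wt rho c = \sum_c wt rho c * (F c)%:R)%R.
Proof. by rewrite big_mkcond /=; apply: eq_bigr => c _; case: (F c); rewrite ?mulr1 ?mulr0. Qed.

Lemma cylD (D : {set T}) b (Z : pred {ffun T -> bool}) :
  (forall e, e \in D -> forall c b', Z (upd c e b') = Z c) ->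
  (\sum_(c : {ffun T -> bool} | [forall e in D, c e == b] && Z c) wt rho c = pib rho b ^+ #|D| * \sum_(c | Z c) wt rho c)%R.
Proof.
move=> HZ; rewrite !sum_filter.
have := @cylS R T rho (enum D) b (fun c => (Z c)%:R) (enum_uniq _).
rewrite -cardE => <-.
  apply: eq_bigr => c _; congr (_ * _); rewrite -natrM mulnb; congr (_%:R); congr (_ && _).
  apply/forallP/allP => h e.
    by rewrite mem_enum => eD; have := h e; rewrite eD.
  by apply/implyP => eD; apply: h; rewrite mem_enum.
by move=> e; rewrite mem_enum => eD c b'; rewrite HZ.
Qed.
End Cyl2.

Section Events.
Variables (V : finType) (E : rel V) (M n : nat).
Hypothesis symE : symmetric E.
Hypothesis irrE : irreflexive E.
Notation N := M.+1.
Notation W := ('I_N + 'I_N)%type.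
Notation ET := ('I_N * 'I_N)%type.
Notation FT := {ffun 'I_n -> 'I_N}.

Definition DB (st : FT * FT) : {set ET} := [set (st.1 ij.1, st.2 ij.2) | ij : 'I_n * 'I_n].
Definition gB (st : FT * FT) := injectiveb st.1 && injectiveb st.2.
Definition Idx := ({ffun V -> W} + (FT * FT))%type.
Definition Dsup (i : Idx) : {set ET} := match i with inl f => DA E f | inr st => DB st end.
Definition gd (i : Idx) : bool := match i with inl f => gA E f | inr st => gB st end.
Definition cl (i : Idx) : bool := if i is inl _ then true else false.
Definition Ev (i : Idx) : pred {ffun ET -> bool} :=
  fun c => gd i && [forall e in Dsup i, c e == cl i].
Definition adjI (i j : Idx) := ~~ [disjoint Dsup i & Dsup j].

Lemma DB_le st : (#|DB st| <= n * n)%N.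
Proof. by apply: (leq_trans (leq_imset_card _ _)); rewrite card_prod card_ord. Qed.

Lemma DB_eq st : gB st -> #|DB st| = (n * n)%N.
Proof.
case/andP => /injectiveP i1 /injectiveP i2.
rewrite /DB card_imset ?cardsT ?card_prod ?card_ord //.
by move=> [a b] [a' b'] /= [/i1 -> /i2 ->].
Qed.

Lemma Ev_upd j e c b' : e \notin Dsup j -> Ev j (upd c e b') = Ev j c.
Proof.
move=> eD; rewrite /Ev; congr (_ && _).
apply/forallP/forallP => h e'; apply/implyP => e'D; have := implyP (h e') e'D;
  rewrite ffunE; case: (eqVneq e' e) => [ee|//]; by move: e'D; rewrite ee (negPf eD).
Qed.


Lemma good_coloring (k t r L : nat) :
  (2 <= k)%N -> (2 <= num_edges E)%N ->
  (8 * (#|V| * #|V| * (#|V| * #|V| * (N + N) ^ (#|V| - 2))) <= k ^ num_edges E)%N ->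
  (n * n = k * t)%N -> (4 * L = k ^ num_edges E)%N ->
  (n * n * (#|V| * #|V| * (N + N) ^ (#|V| - 2)) <= L * r)%N ->
  (16 * (N ^ n * N ^ n) * 2 ^ r <= 2 ^ t)%N ->
  exists c : {ffun ET -> bool}, forall i : Idx, ~~ Ev i c.
Proof.
move=> k2 q2 hA hnn hL hB hK.
set q := num_edges E in q2 hA hL hB.
set K := (N ^ n * N ^ n)%N in hK.
set bnd := (#|V| * #|V| * (N + N) ^ (#|V| - 2))%N in hA hB.
have K0 : (0 < K)%N by rewrite /K muln_gt0 !expn_gt0.
have q1 : (0 < q)%N by apply: leq_trans q2.
pose rh : rat := rho rat k.
have k0 : (0 < k)%N by apply: leq_trans k2.
have rh0 : 0 <= rh by rewrite /rh /rho invr_ge0 ler0n.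
have rh1 : rh <= 1 by rewrite /rh /rho invf_le1 ?ler1n ?ltr0n.
pose x (i : Idx) : rat := if i is inl _ then xa rat k q else xb rat K.
have Hx01 : forall i, 0 <= x i <= 1.
  by case=> [f|st] /=; [apply: xa01 | apply: xb01].
pose w : {ffun ET -> bool} -> rat := wt rh.
have wg0 : forall c, 0 <= w c by move=> c; apply: wt_ge0.
have PrT : Pr w predT = 1 by rewrite /Pr -(wt_sum ET rh); apply: eq_bigl.
have Zinv : forall (S : {set Idx}) e, (forall j, j \in S -> e \notin Dsup j) ->
    forall c b', Zs Ev S (upd c e b') = Zs Ev S c.
  move=> S e h c b'; rewrite /Zs; apply/forallP/forallP => h' j; apply/implyP => jS;
    have := implyP (h' j) jS; by rewrite Ev_upd // h.
have PrEv : forall i (Z : pred {ffun ET -> bool}), gd i ->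
    (forall e, e \in Dsup i -> forall c b', Z (upd c e b') = Z c) ->
    Pr w (predI (Ev i) Z) = pib rh (cl i) ^+ #|Dsup i| * Pr w Z.
  move=> i Z gi HZ; rewrite /Pr -cylD //.
  by apply: eq_bigl => c /=; rewrite /Ev gi.
have PrEv1 : forall i, gd i -> Pr w (Ev i) = pib rh (cl i) ^+ #|Dsup i|.
  move=> i gi; have := PrEv i predT gi (fun _ _ _ _ => erefl).
  rewrite PrT mulr1 => <-; by apply: eq_bigl => c /=; rewrite andbT.
have PrEv0 : forall i (Z : pred {ffun ET -> bool}), ~~ gd i -> Pr w (predI (Ev i) Z) = 0.
  move=> i Z gi; rewrite /Pr big_pred0 // => c /=; by rewrite /Ev (negPf gi).
have Hindep : forall i (S : {set Idx}), (forall j, j \in S -> ~~ adjI i j) ->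
    Pr w (predI (Ev i) (Zs Ev S)) <= Pr w (Ev i) * Pr w (Zs Ev S).
  move=> i S hS; case gi: (gd i).
    rewrite PrEv1 // PrEv //.
    move=> e eD c b'; apply: Zinv => j jS.
    by have := hS j jS; rewrite /adjI negbK => /disjointFr /(_ eD) ->.
  rewrite PrEv0 ?gi //; apply: mulr_ge0; apply: Pr_ge0 => c; exact: wg0.
have prodE : forall i, \prod_(j | adjI i j && (j != i)) (1 - x j) =
    (1 - xa rat k q) ^+ #|[pred g | adjI i (inl g) && (inl g != i)]| *
    (1 - xb rat K) ^+ #|[pred st | adjI i (inr st) && (inr st != i)]|.
  move=> i; rewrite big_sumType /=; congr (_ * _); by rewrite -prodr_const; apply: eq_bigl.
have cAle : forall i, (#|[pred g | adjI i (inl g) && (inl g != i)]| <= #|Dsup i| * bnd)%N.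
  move=> i; apply: leq_trans (count_nbr irrE (Dsup i)).
  by apply: subset_leq_card; apply/subsetP => g; rewrite !inE => /andP [].
have cBle : forall i, (#|[pred st | adjI i (inr st) && (inr st != i)]| <= K)%N.
  move=> i; apply: (leq_trans (max_card _)).
  by rewrite card_prod card_ffun !card_ord.
have Hcond : forall i, Pr w (Ev i) <= x i * \prod_(j | adjI i j && (j != i)) (1 - x j).
  move=> i; case gi: (gd i); last first.
    have -> : Pr w (Ev i) = 0.
      rewrite -(PrEv0 i predT (negbT gi)); apply: eq_bigl => c /=; by rewrite andbT.
    apply: mulr_ge0; first by case/andP: (Hx01 i).
    by apply: prodr_ge0 => j _; case/andP: (Hx01 j) => _ h; rewrite subr_ge0.
  rewrite PrEv1 // prodE.
  case: i gi => [f|st] /= gi.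
    apply: (le_trans (pow_mono_exp rh0 rh1 (DA_ge symE gi))).
    apply: (condA rat k2 K0 q1 _ (cBle _) hA).
    apply: (leq_trans (cAle _)); rewrite leq_mul2r; apply/orP; right; exact: DA_le.
  rewrite DB_eq //.
  apply: (condB rat k2 K0 q1 _ (cBle _) hnn hL hB hK).
  apply: (leq_trans (cAle _)); rewrite leq_mul2r; apply/orP; right; exact: DB_le.
have := lll wg0 Hx01 Hindep Hcond.
rewrite PrT mulr1.
have xa1 : xa rat k q < 1 by apply: xa_lt1.
have xb1 : xb rat K < 1 by apply: xb_lt1.
have pp : 0 < \prod_i (1 - x i).
  apply: prodr_gt0 => i _; case: i => [f|st] /=; by rewrite subr_gt0.
move=> h; have hpos : 0 < Pr w (Zs Ev [set: Idx]) by apply: lt_le_trans h.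
case: (pickP (Zs Ev [set: Idx])) => [c Hc | none].
  exists c => i; move/forallP: Hc => /(_ i); by rewrite inE.
by move: hpos; rewrite /Pr big_pred0 // ltxx.
Qed.
End Events.

End P5.
Import P5.

Module P6.

Lemma h3_lem (P c w u b s a : nat) : b = 3 + c + (3 + 2*u + w)*P -> s = b+1+u -> a = 2*s+w ->
  2 * a + 4 = (8 * P + 4) * u + (20 + 4 * c + 4 * (3 + w) * P + 2 * w).
Proof. move=> -> -> ->. nia. Qed.

Lemma hu_lem (P c w v : nat) : v = 2 * (8 * P + 4) + (20 + 4 * c + 4 * (3 + w) * P + 2 * w) ->
  (8 * P + 4) * (2 * v) + (20 + 4 * c + 4 * (3 + w) * P + 2 * w) <= 2 ^ v * 2 ^ v.
Proof.
move=> hv; have h1 : v < 2 ^ v by apply: ltn_expl.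
have : v * v <= 2 ^ v * 2 ^ v by apply: leq_mul; apply: ltnW.
have : 1 <= v by rewrite hv; lia.
move: (2 ^ v) h1 => X h1 h2 h3. nia.
Qed.

Lemma ex1 (P c w u b s a q : nat) : b = 3 + c + (3 + 2*u + w)*P -> s = b+1+u -> a = 2*s+w ->
  2 * P + 2 <= q -> c + (a + 1) * P + 2 * s + 2 <= b * q + (b + 1 + 2 * u).
Proof.
move=> hb hs ha hq.
have : b * (2 * P + 2) <= b * q by apply: leq_mul.
rewrite ha hs; move: hb; nia.
Qed.

Lemma params (p q C : nat) : 3 <= p -> 2 * p - 2 <= q ->
  exists M n k t r L, 2 <= k /\ 1 <= n /\ C * (n * n) < M.+1 /\
    8 * (p * p * (p * p * (M.+1 + M.+1) ^ (p - 2))) <= k ^ q /\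
    n * n = k * t /\ 4 * L = k ^ q /\
    n * n * (p * p * (M.+1 + M.+1) ^ (p - 2)) <= L * r /\
    16 * (M.+1 ^ n * M.+1 ^ n) * 2 ^ r <= 2 ^ t.
Proof.
move=> p3 hq.
have [P hP] : exists P, p = P + 2 by exists (p - 2); lia.
have hq' : 2 * P + 2 <= q by lia.
have -> : p - 2 = P by lia.
pose c := p * p * (p * p) * 8.
have hc : p * p * (p * p) * 8 <= 2 ^ c by apply: ltnW; apply: ltn_expl.
have hw : C < 2 ^ C by apply: ltn_expl.
pose v := 2 * (8 * P + 4) + (20 + 4 * c + 4 * (3 + C) * P + 2 * C).
have hv := hu_lem (erefl v).
pose u := 2 * v.
pose b := 3 + c + (3 + 2 * u + C) * P.
pose s := b + 1 + u.
pose a := 2 * s + C.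
have h3 := h3_lem (erefl b) (erefl s) (erefl a).
have e1 := ex1 (erefl b) (erefl s) (erefl a) hq'.
have hu : 2 * a + 4 <= 2 ^ u.
  rewrite h3 /u; have -> : 2 ^ (2 * v) = 2 ^ v * 2 ^ v by rewrite mul2n -addnn expnD.
  exact: hv.
clearbody v.
have b3 : 3 <= b by rewrite /b leq_addr.
have bq : 2 <= b * q.
  apply: (@leq_trans (3 * 1)) => //; apply: leq_mul => //; apply: leq_trans hq'; by rewrite addn2.
have hs : s = b + 1 + u by [].
have ha : a = 2 * s + C by [].
clearbody u b s a c.
have Ma : (2 ^ a).-1.+1 = 2 ^ a by rewrite prednK // expn_gt0.
exists (2 ^ a).-1, (2 ^ s), (2 ^ b), (2 ^ (b + 2 + 2 * u)), (2 ^ (b + 1 + 2 * u)), (2 ^ (b * q - 2)).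
rewrite Ma.
have NN : 2 ^ a + 2 ^ a = 2 ^ (a + 1) by rewrite addn1 expnS mul2n addnn.
rewrite NN -!expnM.
have e2 : c + (a + 1) * P <= b * q by move: e1; rewrite hs; lia.
have hpc : p * p <= 2 ^ c by apply: leq_trans hc; nia.
split; [|split; [|split; [|split; [|split; [|split; [|split]]]]]].
- by rewrite -{1}(expn1 2) leq_exp2l //; lia.
- by rewrite expn_gt0.
- rewrite ha expnD -expnD addnn -mul2n mulnC ltn_pmul2l //.
  by rewrite expn_gt0.
- apply: (@leq_trans (2 ^ c * 2 ^ ((a + 1) * P))).
    have -> : 8 * (p * p * (p * p * 2 ^ ((a + 1) * P))) = p * p * (p * p) * 8 * 2 ^ ((a + 1) * P) by move: (2 ^ ((a + 1) * P)) => X; nia.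
    by apply: leq_mul.
  by rewrite -expnD leq_exp2l.
- by rewrite -!expnD hs; congr (2 ^ _); lia.
- have -> : 4 = 2 ^ 2 by [].
  by rewrite -expnD; congr (2 ^ _); lia.
- apply: (@leq_trans (2 ^ s * 2 ^ s * (2 ^ c * 2 ^ ((a + 1) * P)))).
    apply: leq_mul => //; apply: leq_mul => //.
  rewrite -!expnD leq_exp2l //; move: e1; lia.
- have -> : 16 = 2 ^ 4 by [].
  rewrite -!expnD leq_exp2l //.
  have -> : 2 ^ (b + 2 + 2 * u) = 2 ^ (b + 1 + 2 * u) + 2 ^ (b + 1 + 2 * u).
    by rewrite addnn -mul2n -expnS; congr (2 ^ _); lia.
  rewrite leq_add2r.
  have -> : 2 ^ (b + 1 + 2 * u) = 2 ^ s * 2 ^ u by rewrite -expnD hs; congr (2 ^ _); lia.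
  have s1 : 1 <= 2 ^ s by rewrite expn_gt0.
  have : (2 * a + 4) * 2 ^ s <= 2 ^ u * 2 ^ s by apply: leq_mul.
  move: (2 ^ s) (2 ^ u) s1 => X Y s1. nia.
Qed.

End P6.
Import P6.

Module P7.

Definition Knn (n : nat) : rel ('I_n + 'I_n) := fun x y => cross x y.
Arguments Knn n : clear implicits.

Lemma Knn_simple n : simple_graph (Knn n).
Proof. by split; [move=> [x|x] [y|y] | move=> [x|x]]. Qed.

Lemma Knn_bip n : bipartite (Knn n).
Proof. by exists (fun z => if z is inl _ then true else false) => [[x|x] [y|y]]. Qed.

Lemma Knn_noiso n : no_isolated (Knn n).
Proof. by move=> [x|x]; [exists (inr x) | exists (inl x)]. Qed.

Lemma Knn_edges n : num_edges (Knn n) <= n * n.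
Proof.
rewrite /num_edges.
apply: (@leq_trans #|[set [set inl ij.1; inr ij.2] | ij : 'I_n * 'I_n]|).
  apply: subset_leq_card; apply/subsetP => A; rewrite inE.
  case/existsP => u /existsP [v /andP [Euv /eqP ->]].
  apply/imsetP; case: u v Euv => [i|j] [i'|j'] //= _.
    by exists (i, j').
  by exists (i', j); rewrite // setUC.
by apply: (leq_trans (leq_imset_card _ _)); rewrite card_prod card_ord.
Qed.

Section Glue.
Variables (V : finType) (E : rel V) (M n Nb : nat).
Hypothesis symE : symmetric E.
Hypothesis irrE : irreflexive E.
Hypothesis hNb : Nb <= M.+1.
Hypothesis n1 : 0 < n.
Variable c : {ffun 'I_M.+1 * 'I_M.+1 -> bool}.
Hypothesis Hc : forall i, ~~ Ev E (n := n) i c.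

Definition wd (i : 'I_Nb) : 'I_M.+1 := widen_ord hNb i.
Definition wdW (z : 'I_Nb + 'I_Nb) : 'I_M.+1 + 'I_M.+1 :=
  match z with inl i => inl (wd i) | inr j => inr (wd j) end.
Definition col (i j : 'I_Nb) : bool := c (wd i, wd j).

Lemma wd_inj : injective wd.
Proof. by move=> i j /(congr1 val) /= /val_inj. Qed.

Lemma wdW_inj : injective wdW.
Proof. by move=> [i|i] [j|j] //= [/val_inj ->]. Qed.

Lemma no_red : ~ has_copy E col true.
Proof.
move=> [f [finj fe]].
pose g : {ffun V -> 'I_M.+1 + 'I_M.+1} := [ffun u => wdW (f u)].
apply: (negP (Hc (inl g))); rewrite /Ev /=; apply/andP; split.
  apply/andP; split.
    by apply/injectiveP => u v; rewrite !ffunE => /wdW_inj /finj.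
  apply/forallP => u; apply/forallP => v; apply/implyP => Euv.
  have := fe u v Euv; rewrite !ffunE.
  by case: (f u) => [x|x]; case: (f v) => [y|y].
apply/forallP => [[e1 e2]]; apply/implyP; rewrite inE.
case/existsP => u /existsP [v /andP [/andP [Euv]]]; rewrite !ffunE.
have := fe u v Euv.
case: (f u) => [x|x]; case: (f v) => [y|y] //= h /eqP [<-] /eqP [<-].
by move: h; rewrite /col.
Qed.

Lemma blue_ev (s t : {ffun 'I_n -> 'I_M.+1}) : injective s -> injective t ->
  (forall i j, c (s i, t j) = false) -> Ev E (inr (s, t)) c.
Proof.
move=> si ti h; rewrite /Ev /=; apply/andP; split.
  by apply/andP; split; apply/injectiveP.
apply/forallP => e; apply/implyP => /imsetP [[i j] _ ->] /=.
by rewrite h.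
Qed.

Lemma no_blue : ~ has_copy (Knn n) col false.
Proof.
move=> [f [finj fe]].
pose o : 'I_n := Ordinal n1.
have fe' : forall x y, cross x y -> KNN_col col false (f x) (f y) by move=> x y; apply: fe.
case fo: (f (inl o)) => [a|b].
  have hr : forall j, exists y, f (inr j) = inr y.
    move=> j; have := fe' (inl o) (inr j) erefl; rewrite fo.
    by case: (f (inr j)) => // y _; exists y.
  have [y0 fy0] := hr o.
  have hl : forall i, exists x, f (inl i) = inl x.
    move=> i; have := fe' (inl i) (inr o) erefl; rewrite fy0.
    by case: (f (inl i)) => // x _; exists x.
  pose s := [ffun i => wd (if f (inl i) is inl x then x else a)].
  pose t := [ffun j => wd (if f (inr j) is inr y then y else a)].
  apply: (negP (Hc (inr (s, t)))); apply: blue_ev.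
  - move=> i i'; rewrite /s !ffunE.
    have [x ex] := hl i; have [x' ex'] := hl i'; rewrite ex ex' => /wd_inj exx.
    have : f (inl i) = f (inl i') by rewrite ex ex' exx.
    by move/finj => [].
  - move=> j j'; rewrite /t !ffunE.
    have [y ey] := hr j; have [y' ey'] := hr j'; rewrite ey ey' => /wd_inj eyy.
    have : f (inr j) = f (inr j') by rewrite ey ey' eyy.
    by move/finj => [].
  - move=> i j; rewrite /s /t !ffunE.
    have [x ex] := hl i; have [y ey] := hr j; rewrite ex ey.
    have := fe' (inl i) (inr j) erefl; rewrite ex ey /= /col.
    by move/eqP.
have hl : forall j, exists y, f (inr j) = inl y.
  move=> j; have := fe' (inl o) (inr j) erefl; rewrite fo.
  by case: (f (inr j)) => // y _; exists y.
have [y0 fy0] := hl o.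
have hr : forall i, exists x, f (inl i) = inr x.
  move=> i; have := fe' (inl i) (inr o) erefl; rewrite fy0.
  by case: (f (inl i)) => // x _; exists x.
pose s := [ffun j => wd (if f (inr j) is inl x then x else b)].
pose t := [ffun i => wd (if f (inl i) is inr y then y else b)].
apply: (negP (Hc (inr (s, t)))); apply: blue_ev.
- move=> i i'; rewrite /s !ffunE.
  have [x ex] := hl i; have [x' ex'] := hl i'; rewrite ex ex' => /wd_inj exx.
  have : f (inr i) = f (inr i') by rewrite ex ex' exx.
  by move/finj => [].
- move=> j j'; rewrite /t !ffunE.
  have [y ey] := hr j; have [y' ey'] := hr j'; rewrite ey ey' => /wd_inj eyy.
  have : f (inl j) = f (inl j') by rewrite ey ey' eyy.
  by move/finj => [].
- move=> j i; rewrite /s /t !ffunE.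
  have [x ex] := hl j; have [y ey] := hr i; rewrite ex ey.
  have := fe' (inl i) (inr j) erefl; rewrite ex ey /= /col.
  by move/eqP.
Qed.

Lemma no_br : ~ br_prop E (Knn n) Nb.
Proof. by move=> /(_ col) [/no_red | /no_blue]. Qed.
End Glue.

End P7.
Import P7.

Unset Implicit Arguments.

Theorem mainTheorem2 (V : finType) (E : rel V) :
  simple_graph E -> bipartite E ->
  3 <= #|V| -> 2 * #|V| - 2 <= num_edges E ->
  ~ br_size_linear E.
Proof.
move=> [symE irrE] _ p3 hq [C HC].
have [M [n [k [t [r [L [k2 [n1 [hC [hA [hnn [hL [hB hK]]]]]]]]]]]]] := params C p3 hq.
have q2 : 1 < num_edges E.
  apply: leq_trans hq; rewrite mul2n -addnn.
  by apply: (@leq_trans (3 + 3 - 2)) => //; apply: leq_sub2r; apply: leq_add.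
have [c Hc] := good_coloring (M := M) (n := n) symE irrE k2 q2 hA hnn hL hB hK.
have [N [[brN _] hN]] := HC _ (Knn n) (@Knn_simple n) (@Knn_bip n) (@Knn_noiso n).
have hNb : N <= M.+1.
  apply: (leq_trans hN); apply: ltnW; apply: leq_ltn_trans hC.
  by rewrite leq_mul2l Knn_edges orbT.
exact: (no_br hNb n1 Hc brN).
Qed.
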